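(* Let $d\ge 2$ and $\ell\ge 2$. The girth $g$ (length of a shortest directed cycle) of the cyclic Kautz digraph $CK(d,\ell)$ satisfies $g\ge k_0$, where $k_0$ is the smallest positive integer $k$ such that $\ell\not\equiv 1 \pmod k$.
   Context: The cyclic Kautz digraph $CK(d,\ell)$ has vertex set $\{x_1\ldots x_\ell\in\mathbb Z_{d+1}^\ell : x_i\neq x_{i+1}\ (1\le i\le \ell-1),\ x_\ell\neq x_1\}$ and arcs $x_1x_2\ldots x_\ell\to x_2\ldots x_\ell y$ for every $y\in\mathbb Z_{d+1}$ with $y\neq x_2,x_\ell$. *)

(* Defs.v *)
From mathcomp Require Import all_boot.
Unset Strict Implicit. Unset Printing Implicit Defensive.

(* Vertices of CK(d,l): words x_1..x_l over Z_{d+1} (modelled by 'I_d.+1;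
   only equality of letters matters), written as seqs of size l with
   0-based indices: x_i <> x_{i+1} for consecutive letters and x_l <> x_1. *)
Definition ck_vertex (d l : nat) (x : seq 'I_d.+1) : Prop :=
  size x = l /\
  (forall i, i.+1 < l -> nth ord0 x i <> nth ord0 x i.+1) /\
  nth ord0 x l.-1 <> nth ord0 x 0.

Definition ck_arc (d l : nat) (x y : seq 'I_d.+1) : Prop :=
  ck_vertex d l x /\ ck_vertex d l y /\
  exists z : 'I_d.+1, z <> nth ord0 x 1 /\ z <> nth ord0 x l.-1 /\
                      y = rcons (behead x) z.

Definition ck_dicycle (d l : nat) (c : seq (seq 'I_d.+1)) : Prop :=
  0 < size c /\ uniq c /\
  forall i, i < size c ->
    ck_arc d l (nth [::] c i) (nth [::] c (i.+1 %% size c)).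

Lemma k0_exists (l : nat) : 1 < l -> exists k, (0 < k) && (l != 1 %[mod k]).
Proof.
move=> hl; exists l; rewrite (ltnW hl) /= modnn modn_small //.
Qed.

Definition k0 (l : nat) (hl : 1 < l) : nat := ex_minn (@k0_exists l hl).

(* Main.v *)
Require Import Defs.
From mathcomp Require Import all_boot.
From mathcomp Require Import zify.

Theorem mainTheorem9 (d l : nat) (hd : 2 <= d) (hl : 1 < l)
  (c : seq (seq 'I_d.+1)) :
  ck_dicycle d l c -> @k0 l hl <= size c.
Proof.
case=> kpos [_ harc].
set k := size c in kpos harc *.
rewrite leqNgt; apply/negP => hlt.
have hmod : l == 1 %[mod k].
  move: hlt; rewrite /k0; case: ex_minnP => m /andP [m0 _] hmin hkm.
  apply/negPn/negP => hn.
  have := hmin k; rewrite kpos hn => /(_ isT); rewrite leqNgt hkm //.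
set c0 := nth [::] c 0.
have P : forall j, j <= k -> forall i, i + j < l ->
    nth ord0 (nth [::] c (j %% k)) i = nth ord0 c0 (i + j).
  elim=> [|j IH] hj i hi.
    by rewrite mod0n addn0.
  have hjk : j < k by [].
  have [hv [_ [z [_ [_ ->]]]]] := harc j hjk.
  case: hv => hsz _.
  rewrite nth_rcons size_behead hsz.
  have hi' : i < l.-1 by lia.
  rewrite hi' nth_behead.
  rewrite -(modn_small hjk) (IH (ltnW hj) i.+1); last lia.
  by rewrite (modn_small hjk) addSnnS.
have per : forall i, i + k < l -> nth ord0 c0 i = nth ord0 c0 (i + k).
  by move=> i hi; rewrite -(P k (leqnn k) i hi) modnn.
have Q : forall m, m * k < l -> nth ord0 c0 (m * k) = nth ord0 c0 0.
  elim=> [|m IH] h //.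
  rewrite mulSn addnC -per; last lia.
  apply: IH; lia.
have hdvd : k %| l - 1 by rewrite -eqn_mod_dvd // ltnW.
have hc0 : ck_vertex d l c0 by case: (harc 0 kpos).
case: hc0 => _ [_ hne]; apply: hne.
have -> : l.-1 = (l - 1) %/ k * k by rewrite divnK // subn1.
apply: Q; rewrite divnK // subn1; lia.
Qed.
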